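(* Let $\Gamma$ be a $\mathbb{Z}^d$-periodic graph with generic dispersion polynomial $\Phi$ and let $\eta\in\mathbb{Z}^{d+1}$. Then $\eta$ exposes a vertical face of $\mathcal{N}(\Phi)$ if and only if the initial graph $\mathrm{in}_\eta\widehat{\Gamma}$ has a vertex $v$ carrying both loops, the one labeled $\lambda$ and the one labeled $-V(v)$. Moreover, such a vector $\eta$ is horizontal (its last coordinate is $0$).
   Context: A $\mathbb{Z}^d$-periodic graph $\Gamma$ is a simple undirected graph of bounded degree with a free $\mathbb{Z}^d$-action $(\alpha,v)\mapsto\alpha+v$ by automorphisms with finitely many vertex and edge orbits; $W$ is a set of vertex orbit representatives. With independent indeterminates $e$ (one per edge orbit) and $V(v)$ ($v\in W$), the generic Floquet matrix $H$ has $(v,u)$ entry $\delta_{v,u}V(v)-\sum_{\alpha: v\sim\alpha+u}e_{(v,\alpha+u)}z^\alpha$ and $\Phi=\det(\lambda I_W-H)$, viewed as a polynomial in $(z,\lambda)$ with coefficients in $\mathbb{C}[e,V]$; $\mathcal{N}(\Phi)\subset\mathbb{R}^{d+1}$ is the convex hull of its $(z,\lambda)$-exponent vectors. A vector $\eta$ exposes the face on which $x\mapsto\eta\cdot x$ is minimized; a face is vertical if it contains a segment parallel to $(0,\dots,0,1)$. The directed labeled multigraph $\widehat{\Gamma}$ has vertex set $W$, two loops at each $v$ labeled $\lambda$ and $-V(v)$, and for each $u,v\in W$, $\alpha\in\mathbb{Z}^d$ with $v\sim\alpha+u$ a directed edge $v\leftarrow u$ labeled $e_{(v,\alpha+u)}z^\alpha$.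 A cycle cover $\zeta$ is a set of edges such that each vertex is the tail of exactly one and the head of exactly one edge of $\zeta$; $\mathrm{wt}(\zeta)$ is the product of its labels and $\eta(\zeta)$ is $\eta$ applied to the $(z,\lambda)$-exponent of $\mathrm{wt}(\zeta)$. The initial graph $\mathrm{in}_\eta\widehat{\Gamma}$ is the subgraph on $W$ of those edges lying in some cycle cover $\zeta$ of $\widehat{\Gamma}$ with $\eta(\zeta)$ minimal among all cycle covers. *)

(* Defs.v *)
From HB Require Import structures.
From mathcomp Require Import all_boot all_order all_algebra.
From mathcomp Require Import algC.
From mathcomp Require Import mpoly.
From mathcomp Require Import Rstruct.

Set Implicit Arguments.
Unset Strict Implicit.
Unset Printing Implicit Defensive.

Import Order.TTheory GRing.Theory Num.Theory.
Local Open Scope ring_scope.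

(* A Z^d-periodic graph, given by a set W of vertex-orbit representatives
   (vertex set W x Z^d, vertex (v,b) written b+v) and, for u v : W, the
   finite list adj v u of all alpha in Z^d with v ~ alpha + u.           *)
Record periodic_graph (d : nat) := PeriodicGraph {
  pg_W : finType;
  pg_adj : pg_W -> pg_W -> seq 'rV[int]_d;
  pg_uniq : forall v u, uniq (pg_adj v u);
  (* undirected + Z^d-invariant:  v ~ alpha+u  <->  u ~ (-alpha)+v *)
  pg_sym : forall v u (a : 'rV[int]_d), (a \in pg_adj v u) = (- a \in pg_adj u v);
  pg_noloop : forall v, (0 : 'rV[int]_d) \notin pg_adj v v
}.

Section Defs.
Variables (d : nat) (G : periodic_graph d).
Local Notation W := (pg_W G).
Local Notation adj := (@pg_adj d G).

(* directed edges  v <- u  (v ~ alpha + u) of hat Gamma, other than loops *)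
Definition DirE : finType := {p : W * W & 'I_(size (adj p.1 p.2))}.
Definition dhead (x : DirE) : W := (tag x).1.
Definition dtail (x : DirE) : W := (tag x).2.
Definition dalpha (x : DirE) : 'rV[int]_d :=
  nth 0 (adj (tag x).1 (tag x).2) (tagged x).

Definition isrev (x y : DirE) : bool :=
  [&& dhead y == dtail x, dtail y == dhead x & dalpha y == - dalpha x].

Definition orep (x : DirE) : DirE :=
  if [pick y | isrev x y] is Some y then
    (if (enum_rank y < enum_rank x)%N then y else x)
  else x.

(* indeterminates: one per edge orbit (indexed by its representative) and
   one V(v) per v in W; coefficient ring C[e,V]  (C = algC) *)
Definition Var : finType := (DirE + W)%type.
Definition Coef := {mpoly algC[#|Var|]}.
Definition evar (x : DirE) : Coef := 'X_(enum_rank (inl (orep x) : Var)).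
Definition Vvar (v : W) : Coef := 'X_(enum_rank (inr v : Var)).

Definition ZL := {mpoly Coef[d.+1]}.
Definition zvar (j : 'I_d) : ZL := 'X_(widen_ord (leqnSn d) j).
Definition lam : ZL := 'X_(@ord_max d).

(* shift M >= |alpha_j| for all alpha occurring, so that z^M * H has only
   non-negative exponents *)
Definition shiftM : nat :=
  \max_(x : DirE) \max_(j < d) `|(dalpha x 0 j)%R|%N.

(* z^(beta + M*1), for beta with beta_j + M >= 0 *)
Definition zmon (b : 'rV[int]_d) : ZL :=
  \prod_(j < d) zvar j ^+ `|(b 0 j + (shiftM : int))%R|%N.

(* z^M * (lambda I - H):  (v,u) entry
   z^M (delta_{vu} (lambda - V(v)))  -  sum_{alpha: v ~ alpha+u} e z^(alpha+M) *)
Definition shiftedFloquet : 'M[ZL]_#|W| :=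
  \matrix_(i, k)
    (let v := enum_val i in let u := enum_val k in
     zmon 0 * ((v == u)%:R * (lam - (Vvar v)%:MP))
     - \sum_(x : DirE | (dhead x == v) && (dtail x == u))
          (evar x)%:MP * zmon (dalpha x)).

(* z^(|W| M) * Phi, a genuine polynomial *)
Definition shiftedPhi : ZL := \det shiftedFloquet.

(* exponent vectors (z-exponents, lambda-exponent) of the Laurent polynomial
   Phi = det(lambda I - H) = z^(-|W| M) * shiftedPhi, as points of R^(d+1) *)
Definition Phi_exponents : seq 'rV[Rdefinitions.R]_(d.+1) :=
  [seq \row_(i < d.+1)
        ((m i)%:R - (if (i < d)%N then (#|W| * shiftM)%:R else 0))
   | m : 'X_{1..d.+1} <- msupp shiftedPhi].
End Defs.

Definition in_conv (n : nat) (S : seq 'rV[Rdefinitions.R]_n) (x : 'rV[Rdefinitions.R]_n) : Prop :=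
  exists mu : 'I_(size S) -> Rdefinitions.R,
    (forall i, 0 <= mu i) /\ \sum_i mu i = 1 /\
    x = \sum_i mu i *: S`_i.

Definition newton (d : nat) (G : periodic_graph d) : 'rV[Rdefinitions.R]_(d.+1) -> Prop :=
  in_conv (Phi_exponents G).

Definition dotZR (n : nat) (eta : 'rV[int]_n) (x : 'rV[Rdefinitions.R]_n) : Rdefinitions.R :=
  \sum_i (eta 0 i)%:~R * x 0 i.

Definition exposed_face (n : nat) (P : 'rV[Rdefinitions.R]_n -> Prop) (eta : 'rV[int]_n)
  (x : 'rV[Rdefinitions.R]_n) : Prop :=
  P x /\ forall y, P y -> dotZR eta x <= dotZR eta y.

Definition vertical (d : nat) (F : 'rV[Rdefinitions.R]_(d.+1) -> Prop) : Prop :=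
  exists (x : 'rV[Rdefinitions.R]_(d.+1)) (t : Rdefinitions.R), t != 0 /\
    forall s : Rdefinitions.R, 0 <= s <= 1 -> F (x + (s * t) *: delta_mx 0 ord_max).

Section Hat.
Variables (d : nat) (G : periodic_graph d).
Local Notation W := (pg_W G).

(* edges: inl (inl v) = loop at v labeled lambda,
          inl (inr v) = loop at v labeled -V(v),
          inr x      = edge  v <- u  labeled e z^alpha *)
Definition HatE : finType := ((W + W) + DirE G)%type.
Definition lamloop (v : W) : HatE := inl (inl v).
Definition Vloop (v : W) : HatE := inl (inr v).

Definition hhead (e : HatE) : W :=
  match e with inl (inl v) => v | inl (inr v) => v | inr x => dhead x end.
Definition htail (e : HatE) : W :=
  match e with inl (inl v) => v | inl (inr v) => v | inr x => dtail x end.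

Definition cycle_cover (z : {set HatE}) : Prop :=
  forall v : W,
    #|[set e in z | htail e == v]| = 1%N /\ #|[set e in z | hhead e == v]| = 1%N.

(* (z,lambda)-exponent of wt(z), as an element of Z^(d+1) *)
Definition hexp (e : HatE) : 'rV[int]_(d.+1) :=
  match e with
  | inl (inl v) => delta_mx 0 ord_max
  | inl (inr v) => 0
  | inr x => \row_(i < d.+1)
               (if unlift ord_max i is Some j then dalpha x 0 j else 0)
  end.
Definition wt_exp (z : {set HatE}) : 'rV[int]_(d.+1) := \sum_(e in z) hexp e.

Definition eta_cc (eta : 'rV[int]_(d.+1)) (z : {set HatE}) : int :=
  \sum_i eta 0 i * wt_exp z 0 i.

Definition in_initial (eta : 'rV[int]_(d.+1)) (e : HatE) : Prop :=
  exists z : {set HatE}, [/\ cycle_cover z, e \in z &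
    forall z' : {set HatE}, cycle_cover z' -> eta_cc eta z <= eta_cc eta z'].
End Hat.

(* Main.v *)
Require Import Defs.
From HB Require Import structures.
From mathcomp Require Import all_boot all_order all_algebra all_fingroup.
From mathcomp Require Import algC.
From mathcomp Require Import mpoly.
From mathcomp Require Import Rstruct.
From mathcomp Require Import lra.
From Stdlib Require Import Classical_Prop.
Import Order.TTheory GRing.Theory Num.Theory.
Local Open Scope ring_scope.
Set Implicit Arguments.
Unset Strict Implicit.
Unset Printing Implicit Defensive.

Local Notation R := Rdefinitions.R.

Section Part1.
Variables (d : nat) (G : periodic_graph d).
Local Notation W := (pg_W G).
Local Notation n := #|W|.
Local Notation vv i := (@enum_val W _ i).

Definition zsh (b : 'rV[int]_d) : 'X_{1..d.+1} :=
  [multinom (if unlift ord_max i is Some j then `|(b 0%R j + (shiftM G : int))%R|%N else 0%N) | i < d.+1].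

Lemma zmonE b : zmon G b = 'X_[zsh b].
Proof.
rewrite /zmon /zvar mprodXnE; congr 'X_[_]; apply/mnmP => i.
rewrite mnm_sumE mnmE.
case: (unliftP ord_max i) => [j0 ->|->].
  rewrite (bigD1 j0) //= mulmnE mnm1E.
  have -> : widen_ord (leqnSn d) j0 == lift ord_max j0.
    by apply/eqP/val_inj; rewrite /= /bump leqNgt ltn_ord.
  rewrite mul1n big1 ?addn0 // => j /negbTE nj.
  rewrite mulmnE mnm1E.
  have -> : (widen_ord (leqnSn d) j == lift ord_max j0) = false.
    apply/negbTE; apply: contraFN nj => /eqP/(congr1 val) /=.
    by rewrite /bump leqNgt ltn_ord /= => h; apply/eqP/val_inj.
  by rewrite mul0n.
rewrite big1 // => j _; rewrite mulmnE mnm1E.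
have -> : (widen_ord (leqnSn d) j == ord_max) = false.
  by apply/negbTE; rewrite -val_eqE /= neq_ltn ltn_ord.
by rewrite mul0n.
Qed.

Definition cT (e : HatE G) : Coef G :=
  match e with
  | inl (inl v) => 1
  | inl (inr v) => - Vvar v
  | inr x => - evar x
  end.

Definition zT (e : HatE G) : 'X_{1..d.+1} :=
  match e with
  | inl (inl v) => (zsh 0 + U_(ord_max))%MM
  | inl (inr v) => zsh 0
  | inr x => zsh (dalpha x)
  end.

Definition hT (e : HatE G) : ZL G := (cT e)%:MP * 'X_[zT e].

Lemma entryE i k : shiftedFloquet G i k =
  \sum_(e : HatE G | (hhead e == vv i) && (htail e == vv k)) hT e.
Proof.
rewrite mxE big_sumType big_sumType /=.
have HD : \sum_(x : DirE G | (dhead x == vv i) && (dtail x == vv k)) hT (inr x)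
  = - \sum_(x : DirE G | (dhead x == vv i) && (dtail x == vv k))
        ((evar x)%:MP * zmon G (dalpha x)).
  rewrite -sumrN; apply: eq_bigr => x _.
  by rewrite /hT /= zmonE rmorphN mulNr.
rewrite HD; congr (_ - _).
case: (eqVneq (vv i) (vv k)) => [E|NE].
  rewrite -E (big_pred1 (vv i)); last by move=> u; rewrite /= andbb.
  rewrite (big_pred1 (vv i)); last by move=> u; rewrite /= andbb.
  rewrite /hT /= mpolyXD zmonE /lam mpolyC1 mul1r mulrBr.
  by rewrite !mul1r rmorphN mulNr mulrBr; congr (_ - _); rewrite mulrC.
rewrite mul0r mulr0 !big_pred0 ?addr0 // => u /=;
  apply/negbTE; apply: contra NE => /andP[/eqP<- /eqP<-] //.
Qed.

Definition Qf (s : 'S_n) (i : 'I_n) (e : HatE G) : bool :=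
  (hhead e == vv i) && (htail e == vv (s i)).

Lemma detPhiE : shiftedPhi G = \sum_(s : 'S_n) (-1) ^+ s *
   \sum_(f in family (Qf s)) \prod_i hT (f i).
Proof.
rewrite /shiftedPhi /determinant; apply: eq_bigr => s _; congr (_ * _).
rewrite -(bigA_distr_big_dep (Qf s) (fun _ e => hT e)); apply: eq_bigr => i _; exact: entryE.
Qed.

Lemma mpolyX_sum (k : nat) (R : nzRingType) (I : finType) (F : I -> 'X_{1..k}) :
  \prod_i ('X_[F i] : {mpoly R[k]}) = 'X_[\sum_i F i].
Proof. by rewrite (big_morph (fun m => ('X_[m] : {mpoly R[k]})) (@mpolyXD _ _) (@mpolyX0 _ _)). Qed.

Lemma mcoeff_sumE (k : nat) (R : nzRingType) (I : finType) (P : pred I)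
   (F : I -> {mpoly R[k]}) m :
  (\sum_(i | P i) F i)@_m = \sum_(i | P i) (F i)@_m.
Proof. exact: raddf_sum. Qed.

Lemma prod_hT (f : {ffun 'I_n -> HatE G}) :
  \prod_i hT (f i) = (\prod_i cT (f i))%:MP * 'X_[\sum_i zT (f i)].
Proof. by rewrite big_split /= rmorph_prod mpolyX_sum. Qed.

Definition bT (e : HatE G) : nat :=
  match e with inl (inl _) => 0%N | _ => 1%N end.

Definition kT (e : HatE G) : 'X_{1..#|Var G|} :=
  match e with
  | inl (inl v) => 0%MM
  | inl (inr v) => U_(enum_rank (inr v : Var G))%MM
  | inr x => U_(enum_rank (inl (orep x) : Var G))%MM
  end.

Lemma cTE e : cT e = (-1) ^+ bT e * 'X_[kT e].
Proof.
by case: e => [[v|v]|x] /=; rewrite ?mpolyX0 ?expr0 ?mul1r ?expr1 ?mulN1r.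
Qed.

Lemma prod_cT (f : {ffun 'I_n -> HatE G}) :
  \prod_i cT (f i) = (-1) ^+ (\sum_i bT (f i)) * 'X_[\sum_i kT (f i)].
Proof.
rewrite (eq_bigr _ (fun i _ => cTE (f i))) big_split /= mpolyX_sum.
by rewrite prodrXr.
Qed.

Lemma mcoeff_sign (k : nat) (R : nzRingType) (b : nat) (p : {mpoly R[k]}) m :
  ((-1) ^+ b * p)@_m = (-1) ^+ b * p@_m.
Proof.
have -> : ((-1) ^+ b : {mpoly R[k]}) = ((-1) ^+ b)%:MP by rewrite rmorph_sign.
by rewrite mcoeffCM.
Qed.

Definition Bf (f : {ffun 'I_n -> HatE G}) := (\sum_i bT (f i))%N.
Definition Kf (f : {ffun 'I_n -> HatE G}) := (\sum_i kT (f i))%MM.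
Definition Zf (f : {ffun 'I_n -> HatE G}) := (\sum_i zT (f i))%MM.

Lemma coefPhiE m k : ((shiftedPhi G)@_m)@_k =
  \sum_(s : 'S_n) \sum_(f in family (Qf s))
     (-1) ^+ (s + Bf f) * ((Kf f == k) && (Zf f == m))%:R.
Proof.
rewrite detPhiE !mcoeff_sumE; apply: eq_bigr => s _.
rewrite mcoeff_sign mcoeff_sumE mcoeff_sign mcoeff_sumE mulr_sumr; apply: eq_bigr => f _.
rewrite prod_hT mcoeffCM mcoeffX prod_cT.
rewrite /Bf /Kf /Zf; case: (_ == m); last by rewrite mulr0 mcoeff0 mulr0 andbF mulr0.
by rewrite mulr1 mcoeff_sign mcoeffX andbT exprD mulrA.
Qed.
End Part1.

Section Part2.
Variables (d : nat) (G : periodic_graph d).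
Local Notation W := (pg_W G).
Local Notation n := #|W|.
Local Notation vv i := (@enum_val W _ i).
Local Notation Qf := (@Qf d G).

Lemma famP (s : 'S_n) (f : {ffun 'I_n -> HatE G}) :
  f \in family (Qf s) -> forall i, hhead (f i) = vv i /\ htail (f i) = vv (s i).
Proof. by move=> /familyP H i; have /andP[/eqP -> /eqP ->] := H i. Qed.

Lemma fam_inj s f : f \in family (Qf s) -> injective f.
Proof.
move=> /famP H i j E; apply: enum_val_inj.
by rewrite -(H i).1 -(H j).1 E.
Qed.

Lemma fam_cover s f : f \in family (Qf s) -> cycle_cover [set f i | i : 'I_n].
Proof.
move=> Hf v; have H := famP Hf; have Hi := fam_inj Hf.
split.
  rewrite (_ : [set _ in _ | _] = [set f ((s^-1)%g (enum_rank v))]) ?cards1 //.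
  apply/setP => e; rewrite !inE; apply/andP/eqP.
    case=> /imsetP[i _ ->] /eqP; rewrite (H i).2 => E.
    congr (f _); apply: (@perm_inj _ s); rewrite permKV.
    by apply: enum_val_inj; rewrite E enum_rankK.
  move=> ->; split; first exact: imset_f.
  by rewrite (H _).2 permKV enum_rankK.
rewrite (_ : [set _ in _ | _] = [set f (enum_rank v)]) ?cards1 //.
apply/setP => e; rewrite !inE; apply/andP/eqP.
  case=> /imsetP[i _ ->] /eqP; rewrite (H i).1 => E.
  by congr (f _); apply: enum_val_inj; rewrite E enum_rankK.
move=> ->; split; first exact: imset_f.
by rewrite (H _).1 enum_rankK.
Qed.

Section FromCover.
Variable z : {set HatE G}.
Hypothesis Hz : cycle_cover z.

Definition fz : {ffun 'I_n -> HatE G} :=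
  [ffun i => odflt (@lamloop d G (vv i)) [pick e in z | hhead e == vv i]].

Lemma fzP i : fz i \in z /\ hhead (fz i) = vv i.
Proof.
rewrite /fz ffunE; case: pickP => [e /andP[? /eqP ?] //|H] /=.
have /eqP/cards1P [x Ex] := (Hz (vv i)).2.
have : x \in [set e in z | hhead e == vv i] by rewrite Ex set11.
by rewrite inE H.
Qed.

Lemma head_uniq e e' : e \in z -> e' \in z -> hhead e = hhead e' -> e = e'.
Proof.
move=> He He' E; have /eqP/cards1P [x Ex] := (Hz (hhead e)).2.
have H1 : e \in [set x] by rewrite -Ex inE He eqxx.
have H2 : e' \in [set x] by rewrite -Ex inE He' E eqxx.
by rewrite !inE in H1 H2; rewrite (eqP H1) (eqP H2).
Qed.

Lemma tail_uniq e e' : e \in z -> e' \in z -> htail e = htail e' -> e = e'.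
Proof.
move=> He He' E; have /eqP/cards1P [x Ex] := (Hz (htail e)).1.
have H1 : e \in [set x] by rewrite -Ex inE He eqxx.
have H2 : e' \in [set x] by rewrite -Ex inE He' E eqxx.
by rewrite !inE in H1 H2; rewrite (eqP H1) (eqP H2).
Qed.

Lemma sz_inj : injective (fun i => enum_rank (htail (fz i))).
Proof.
move=> i j /(congr1 enum_val); rewrite !enum_rankK => E.
have := congr1 (@hhead _ G) (tail_uniq (fzP i).1 (fzP j).1 E).
by rewrite (fzP i).2 (fzP j).2 => /enum_val_inj.
Qed.

Definition sz : 'S_n := perm sz_inj.

Lemma fz_fam : fz \in family (Qf sz).
Proof.
apply/familyP => i; rewrite /Qf unfold_in (fzP i).2 eqxx /= permE enum_rankK eqxx //.
Qed.

Lemma fz_img : z = [set fz i | i : 'I_n].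
Proof.
apply/setP => e; apply/idP/imsetP => [He|[i _ ->]]; last exact: (fzP i).1.
exists (enum_rank (hhead e)) => //.
apply: head_uniq => //; first exact: (fzP _).1.
by rewrite (fzP _).2 enum_rankK.
Qed.
End FromCover.

Lemma orep_cases (x : DirE G) : orep x = x \/ isrev x (orep x).
Proof.
rewrite /orep; case: pickP => [y Hy|_]; last by left.
by case: ifP => _; [right | left].
Qed.

Lemma orep_pair (x y : DirE G) : orep x = orep y ->
  (dhead x = dhead y /\ dtail x = dtail y) \/ (dhead x = dtail y /\ dtail x = dhead y).
Proof.
have [Ex|/and3P[/eqP h1 /eqP t1 _]] := orep_cases x;
have [Ey|/and3P[/eqP h2 /eqP t2 _]] := orep_cases y; move=> E.
- by left; rewrite -Ex -Ey E.
- by right; rewrite -h2 -t2 -E Ex.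
- by right; rewrite -h1 -t1 E Ey.
- by left; rewrite -t1 -h2 -h1 -t2 E.
Qed.

Lemma sum_pos_ex (I : finType) (F : I -> nat) :
  (0 < \sum_i F i)%N -> exists i, (0 < F i)%N.
Proof.
move=> H; case: (pickP (fun i => 0 < F i)%N) => [i Hi|H0]; first by exists i.
by rewrite big1 in H => // i _; have := H0 i; rewrite lt0n => /negbFE/eqP.
Qed.

Lemma kT_pos e (x : DirE G) :
  (0 < kT e (enum_rank (inl (orep x) : Var G)))%N ->
  exists x', e = inr x' /\ orep x' = orep x.
Proof.
case: e => [[v|v]|x'] /=; rewrite ?mnm0E ?mnm1E //; rewrite lt0b.
  by rewrite (inj_eq enum_rank_inj).
by move=> /eqP/enum_rank_inj [E]; exists x'.
Qed.

Lemma porbit_step (T : finType) (t : {perm T}) x : porbit t (t x) = porbit t x.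
Proof. by have := porbit_perm t 1 x; rewrite expg1. Qed.

Lemma sign_step s f s' f' : f \in family (Qf s) -> f' \in family (Qf s') ->
  Kf f = Kf f' -> forall a, porbit s' (s a) = porbit s' a.
Proof.
move=> Hf Hf' EK a; have [Ha1 Ha2] := famP Hf a.
case E: (f a) Ha1 Ha2 => [[v|v]|x] /= Ha1 Ha2.
- by have -> : s a = a by apply: enum_val_inj; rewrite -Ha2 -Ha1.
- by have -> : s a = a by apply: enum_val_inj; rewrite -Ha2 -Ha1.
set r := enum_rank (inl (orep x) : Var G).
have : (0 < Kf f' r)%N.
  rewrite -EK /Kf mnm_sumE (bigD1 a) //= E /= mnm1E eqxx.
  by rewrite add1n.
rewrite /Kf mnm_sumE => /sum_pos_ex [a' /kT_pos [x' [E' Ex]]].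
have [Hb1 Hb2] := famP Hf' a'; rewrite E' /= in Hb1 Hb2.
case: (orep_pair Ex) => [[h t]|[h t]].
  have Eaa : a' = a by apply: enum_val_inj; rewrite -Hb1 h Ha1.
  have -> : s a = s' a by apply: enum_val_inj; rewrite -Ha2 -t Hb2 Eaa.
  exact: porbit_step.
have Ea : a' = s a by apply: enum_val_inj; rewrite -Hb1 -Ha2 h.
have Ea2 : s' a' = a by apply: enum_val_inj; rewrite -Hb2 -Ha1 t.
by rewrite -Ea -(porbit_step s' a') Ea2.
Qed.

Lemma porbit_sub s f s' f' : f \in family (Qf s) -> f' \in family (Qf s') ->
  Kf f = Kf f' -> forall x, {subset porbit s x <= porbit s' x}.
Proof.
move=> Hf Hf' EK x y /porbitP [i ->].
have : porbit s' ((s ^+ i)%g x) = porbit s' x.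
  elim: i => [|i IH]; first by rewrite expg0 perm1.
  by rewrite expgSr permM (sign_step Hf Hf' EK).
by move=> <-; exact: porbit_id.
Qed.

Lemma sign_eq s f s' f' : f \in family (Qf s) -> f' \in family (Qf s') ->
  Kf f = Kf f' -> odd_perm s = odd_perm s'.
Proof.
move=> Hf Hf' EK; rewrite /odd_perm.
have E x : porbit s x = porbit s' x.
  apply/porbit_setP => y; apply/idP/idP.
    exact: (porbit_sub Hf Hf' EK).
  exact: (porbit_sub Hf' Hf (esym EK)).
suff -> : porbits s = porbits s' by [].
rewrite /porbits; apply/eqP; rewrite eqEsubset; apply/andP; split; apply/subsetP => X /imsetP [x _ ->]; rewrite ?E; apply/imsetP; exists x => //.
Qed.
End Part2.

Section Part3.
Variables (d : nat) (G : periodic_graph d).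
Local Notation W := (pg_W G).
Local Notation n := #|W|.
Local Notation vv i := (@enum_val W _ i).
Local Notation Qf := (@Qf d G).
Local Notation M := (shiftM G).

Lemma absM (x : DirE G) j : (`|dalpha x 0%R j|%N <= M)%N.
Proof.
rewrite /shiftM; apply: (bigop.bigmax_sup x) => //; exact: (bigop.bigmax_sup j).
Qed.

Lemma abs_shift (a : int) : (`|a|%N <= M)%N -> (`|(a + (M : int))%R|%N : int) = a + (M : int).
Proof.
move=> H; rewrite abszE ger0_norm //.
have : `|a| <= (M : int) by rewrite -abszE lez_nat.
by rewrite ler_norml => /andP[H1 _]; rewrite -lerBlDr sub0r.
Qed.

Definition zc (i : 'I_d.+1) : int := if unlift ord_max i is Some _ then (M : int) else 0.

Lemma zT_coord (e : HatE G) i : ((zT e i : nat) : int) = zc i + hexp e 0 i.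
Proof.
rewrite /zc; case: (unliftP ord_max i) => [j ->|->]; rewrite ?liftK ?unlift_none;
case: e => [[v|v]|x] /=; rewrite ?mnmDE /zsh mnmE ?mnm1E ?mxE ?liftK ?unlift_none /=.
- rewrite mxE add0r (negbTE (neq_lift _ _)) eq_sym (negbTE (neq_lift _ _)) addn0.
  by rewrite addr0.
- by rewrite mxE add0r addr0.
- by rewrite abs_shift ?absM // addrC.
- by rewrite eqxx.
- by [].
- by [].
Qed.

Lemma Zf_coord s (f : {ffun 'I_n -> HatE G}) i : f \in family (Qf s) ->
  ((Zf f i : nat) : int) = zc i *+ n + wt_exp [set f j | j : 'I_n] 0 i.
Proof.
move=> Hf; rewrite /Zf mnm_sumE (big_morph Posz PoszD (erefl _)).
rewrite (eq_bigr _ (fun j _ => zT_coord (f j) i)) big_split /= sumr_const card_ord.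
congr (_ + _); rewrite /wt_exp summxE big_imset //.
by move=> a b _ _; apply: (fam_inj Hf).
Qed.

Lemma Bf_mdeg (f : {ffun 'I_n -> HatE G}) : Bf f = mdeg (Kf f).
Proof.
rewrite /Bf /Kf mdeg_sum; apply: eq_bigr => i _.
by case: (f i) => [[v|v]|x] /=; rewrite ?mdeg0 ?mdeg1.
Qed.

Lemma sum_nonzero (I : finType) (P : pred I) (F : I -> algC) :
  \sum_(i | P i) F i != 0 -> exists i, P i /\ F i != 0.
Proof.
move=> H; case: (pickP (fun i => P i && (F i != 0))) => [i /andP[? ?]|H0].
  by exists i.
move: H; rewrite big1 ?eqxx // => i Pi; have := H0 i; rewrite Pi /=.
by move/negbFE/eqP.
Qed.

Lemma supp_cover m : m \in msupp (shiftedPhi G) ->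
  exists s f, f \in family (Qf s) /\ Zf f = m.
Proof.
rewrite mcoeff_msupp => H.
have : exists k, ((shiftedPhi G)@_m)@_k != 0.
  case E: (msupp (shiftedPhi G)@_m) => [|k ks].
    by move: H; rewrite -msupp_eq0 E.
  by exists k; rewrite -mcoeff_msupp E mem_head.
case=> k; rewrite (@coefPhiE d G) => /sum_nonzero [s [_ /sum_nonzero [f [Hf]]]].
case: (Zf f =P m) => [E|_]; last by rewrite andbF mulr0 eqxx.
by move=> _; exists s, f.
Qed.

Lemma cover_supp (z : {set HatE G}) (Hz : cycle_cover z) : Zf (fz z) \in msupp (shiftedPhi G).
Proof.
set f0 := fz z; set s0 := sz Hz; have F0 : f0 \in family (Qf s0) := fz_fam Hz.
rewrite mcoeff_msupp; apply/eqP => H0.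
have : ((shiftedPhi G)@_(Zf f0))@_(Kf f0) = 0 by rewrite H0 mcoeff0.
rewrite coefPhiE.
set c : algC := (-1) ^+ (s0 + Bf f0).
set b := fun f : {ffun 'I_n -> HatE G} => ((Kf f == Kf f0) && (Zf f == Zf f0)).
have E s : \sum_(f in family (Qf s)) (-1) ^+ (s + Bf f) * (b f)%:R
         = c * (\sum_(f in family (Qf s)) (b f : nat))%:R.
  rewrite natr_sum mulr_sumr; apply: eq_bigr => f Hf.
  rewrite /b; case: (Kf f =P Kf f0) => [EK|]; last by rewrite !mulr0.
  by rewrite /c (sign_eq Hf F0 EK) !Bf_mdeg EK.
rewrite (eq_bigr _ (fun s _ => E s)) -mulr_sumr -natr_sum.
move/eqP; rewrite mulf_eq0 signr_eq0 /= pnatr_eq0 => /eqP.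
rewrite (bigD1 s0) //= (bigD1 f0) //= /b !eqxx.
by [].
Qed.
End Part3.


Section Geo.
Variables (k : nat) (S : seq 'rV[R]_k) (eta : 'rV[int]_k).

Lemma dotZR_sum (I : finType) (mu : I -> R) (F : I -> 'rV[R]_k) :
  dotZR eta (\sum_i mu i *: F i) = \sum_i mu i * dotZR eta (F i).
Proof.
rewrite /dotZR.
under eq_bigr => j _ do rewrite summxE mulr_sumr.
rewrite exchange_big /=; apply: eq_bigr => i _.
rewrite mulr_sumr; apply: eq_bigr => j _.
by rewrite mxE mulrCA.
Qed.

Lemma dotZR_lin (a : R) x y : dotZR eta (x + a *: y) = dotZR eta x + a * dotZR eta y.
Proof.
rewrite /dotZR mulr_sumr -big_split /=; apply: eq_bigr => j _.
by rewrite !mxE mulrDr mulrCA.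
Qed.

Lemma in_conv_mem s : s \in S -> in_conv S s.
Proof.
move=> Hs; have Hi : (index s S < size S)%N by rewrite index_mem.
pose i0 := Ordinal Hi.
exists (fun i => (i == i0)%:R); split; first by move=> i; rewrite ler0n.
split.
  by rewrite (bigD1 i0) //= eqxx big1 ?addr0 // => i /negbTE ->.
rewrite (bigD1 i0) //= eqxx scale1r big1 ?addr0 ?nth_index //.
by move=> i /negbTE ->; rewrite scale0r.
Qed.

Lemma in_conv_comb x y (t : R) : 0 <= t <= 1 -> in_conv S x -> in_conv S y ->
  in_conv S ((1 - t) *: x + t *: y).
Proof.
move=> /andP[t0 t1] [mx [mx0 [mx1 ->]]] [my [my0 [my1 ->]]].
exists (fun i => (1 - t) * mx i + t * my i); split.
  by move=> i; rewrite addr_ge0 // mulr_ge0 // subr_ge0.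
split; first by rewrite big_split /= -!mulr_sumr mx1 my1 !mulr1 subrK.
rewrite scaler_sumr [X in X + _]scaler_sumr -big_split /=.
by apply: eq_bigr => i _; rewrite !scalerA -scalerDl.
Qed.

Lemma in_conv_lb c x : (forall s, s \in S -> c <= dotZR eta s) -> in_conv S x ->
  c <= dotZR eta x.
Proof.
move=> H [mu [mu0 [mu1 ->]]]; rewrite dotZR_sum.
have -> : c = \sum_i mu i * c by rewrite -mulr_suml mu1 mul1r.
apply: ler_sum => i _; apply: ler_wpM2l => //; apply: H; exact: mem_nth.
Qed.

Lemma in_conv_face c x (j : 'I_k) : (forall s, s \in S -> c <= dotZR eta s) ->
  in_conv S x -> dotZR eta x = c ->
  (forall s, s \in S -> dotZR eta s = c -> s 0 j = 0) -> x 0 j = 0.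
Proof.
move=> H [mu [mu0 [mu1 Ex]]] Hx Hz.
have Hs (i : 'I_(size S)) : S`_i \in S by exact: mem_nth.
have E0 : \sum_i mu i * (dotZR eta S`_i - c) = 0.
  under eq_bigr => i _ do rewrite mulrBr.
  rewrite sumrB -mulr_suml mu1 mul1r.
  by rewrite -dotZR_sum -Ex Hx subrr.
have Z i : mu i * (dotZR eta S`_i - c) = 0.
  move/eqP: E0; rewrite psumr_eq0 => [/allP /(_ i) |l _].
    by rewrite mem_index_enum /= => /(_ isT)/eqP.
  by rewrite mulr_ge0 // subr_ge0 H.
rewrite Ex summxE big1 // => i _; rewrite mxE.
have := Z i; move/eqP; rewrite mulf_eq0 => /orP[/eqP -> |]; first by rewrite mul0r.
by rewrite subr_eq0 => /eqP E; rewrite Hz ?mulr0.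
Qed.
End Geo.


Lemma fin_min (I : finType) (P : pred I) (F : I -> int) (i0 : I) : P i0 ->
  exists i, P i /\ forall j, P j -> F i <= F j.
Proof.
move=> Pi0; case: (@arg_minP _ _ I i0 P F Pi0) => i Pi H.
by exists i; split => // j /H.
Qed.

Section Main.
Variables (d : nat) (G : periodic_graph d).
Local Notation W := (pg_W G).
Local Notation n := #|W|.
Local Notation Qf := (@Qf d G).
Local Notation M := (shiftM G).

Definition pt (z : {set HatE G}) : 'rV[R]_(d.+1) := \row_i ((wt_exp z 0 i)%:~R).

Lemma dot_pt eta z : dotZR eta (pt z) = (eta_cc eta z)%:~R.
Proof.
rewrite /dotZR /eta_cc rmorph_sum; apply: eq_bigr => i _.
by rewrite mxE rmorphM.
Qed.

Lemma nat_int_R (a : nat) (c w : int) : (a : int) = c + w -> a%:R - c%:~R = w%:~R :> R.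
Proof. by move=> E; rewrite pmulrn E intrD [X in X - _]addrC addrK. Qed.

Lemma shiftR (i : 'I_d.+1) :
  (if (i < d)%N then (n * M)%:R else 0 : R) = (zc G i *+ n)%:~R.
Proof.
rewrite /zc; case: (unliftP ord_max i) => [j ->|->]; rewrite ?liftK ?unlift_none /=.
  have -> : bump d j = j by rewrite /bump leqNgt ltn_ord.
  have E : ((M:int) *+ n) = ((n * M)%N : int).
    by rewrite PoszM mulrC -[(n : int)]natz mulr_natr.
  by rewrite ltn_ord E pmulrn.
by rewrite /= (ltnn d) mul0rn.
Qed.

Lemma supp_pt p : p \in Phi_exponents G <-> exists z, cycle_cover z /\ p = pt z.
Proof.
split.
  move=> /mapP [m Hm ->].
  have [s [f [Hf Ez]]] := supp_cover Hm.
  exists [set f j | j : 'I_n]; split; first exact: fam_cover Hf.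
  apply/rowP => i; rewrite !mxE shiftR; apply: nat_int_R.
  by rewrite -Ez (Zf_coord _ Hf).
move=> [z [Hz ->]]; apply/mapP; exists (Zf (fz z)); first exact: cover_supp.
apply/rowP => i; rewrite !mxE shiftR; apply/esym; apply: nat_int_R.
by rewrite (Zf_coord _ (fz_fam Hz)) -fz_img.
Qed.

Definition gsw (v : W) (e : HatE G) : HatE G :=
  if e == lamloop v then Vloop v else if e == Vloop v then lamloop v else e.

Lemma gswK v : involutive (gsw v).
Proof.
move=> e; rewrite /gsw; case: (eqVneq e (lamloop v)) => [->|N1].
  by rewrite eqxx.
case: (eqVneq e (Vloop v)) => [->|N2]; first by rewrite eqxx.
by rewrite (negbTE N1) (negbTE N2).
Qed.

Lemma gsw_inj v : injective (gsw v).
Proof. exact: (can_inj (gswK v)). Qed.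

Lemma gsw_head v e : hhead (gsw v e) = hhead e.
Proof.
rewrite /gsw; case: (eqVneq e (lamloop v)) => [->|_] //.
by case: (eqVneq e (Vloop v)) => [->|_].
Qed.

Lemma gsw_tail v e : htail (gsw v e) = htail e.
Proof.
rewrite /gsw; case: (eqVneq e (lamloop v)) => [->|_] //.
by case: (eqVneq e (Vloop v)) => [->|_].
Qed.

Definition swap v (z : {set HatE G}) := gsw v @: z.

Lemma swap_cover v z : cycle_cover z -> cycle_cover (swap v z).
Proof.
move=> Hz u; have [H1 H2] := Hz u.
have E (h : HatE G -> W) : (forall e, h (gsw v e) = h e) ->
    [set e in swap v z | h e == u] = gsw v @: [set e in z | h e == u].
  move=> Hh; apply/setP => e; rewrite inE; apply/andP/imsetP.
    case=> /imsetP [e' He' ->]; rewrite Hh => He; exists e' => //.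
    by rewrite inE He' He.
  case=> e'; rewrite inE => /andP [He' Hu] ->; split; first exact: imset_f.
  by rewrite Hh.
split.
  by rewrite (E (@htail d G) (gsw_tail v)) card_imset //; exact: gsw_inj.
by rewrite (E (@hhead d G) (gsw_head v)) card_imset //; exact: gsw_inj.
Qed.

Local Notation delta := (delta_mx 0 (@ord_max d) : 'rV[int]_(d.+1)).

Lemma swap_wt v (z : {set HatE G}) : cycle_cover z -> lamloop v \in z ->
  wt_exp (swap v z) + delta = wt_exp z.
Proof.
move=> Hz Hl.
have HV : Vloop v \notin z.
  by apply/negP => HV; have := head_uniq Hz Hl HV erefl.
rewrite /wt_exp /swap big_imset; last by move=> a b _ _; exact: gsw_inj.
rewrite (bigD1 (lamloop v)) //= [in RHS](bigD1 (lamloop v)) //=.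
rewrite /gsw eqxx /= add0r addrC; congr (_ + _); apply: eq_bigr => e /andP [He Ne].
rewrite (negbTE Ne); case: (eqVneq e (Vloop v)) => [E|//].
by rewrite -E He in HV.
Qed.

Definition ecc (eta : 'rV[int]_(d.+1)) (w : 'rV[int]_(d.+1)) := \sum_i eta 0 i * w 0 i.

Lemma ecc_delta eta w : ecc eta (w + delta) = ecc eta w + eta 0 ord_max.
Proof.
rewrite /ecc; under eq_bigr => i _ do rewrite mxE mulrDr.
rewrite big_split /=; congr (_ + _).
rewrite (bigD1 ord_max) //= mxE !eqxx mulr1 big1 ?addr0 // => i Ni.
by rewrite mxE (negbTE Ni) andbF mulr0.
Qed.

Lemma lam_count (z : {set HatE G}) : wt_exp z 0 ord_max != 0 -> exists v, lamloop v \in z.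
Proof.
case: (pickP (fun v => lamloop v \in z)) => [v Hv|H0]; first by exists v.
rewrite /wt_exp summxE big1 ?eqxx // => e He.
case: e He => [[v|v]|x] He /=; first by rewrite H0 in He.
  by rewrite mxE.
by rewrite mxE unlift_none.
Qed.

Lemma mem_swap v (z : {set HatE G}) e : (e \in swap v z) = (gsw v e \in z).
Proof.
apply/imsetP/idP => [[e' He' ->]|H]; first by rewrite gswK.
by exists (gsw v e); rewrite ?gswK.
Qed.

Lemma swapK v (z : {set HatE G}) : swap v (swap v z) = z.
Proof. by apply/setP => e; rewrite !mem_swap gswK. Qed.

Lemma swap_cc eta v (z : {set HatE G}) : cycle_cover z -> lamloop v \in z ->
  eta_cc eta z = eta_cc eta (swap v z) + eta 0 ord_max.
Proof. by move=> Hz Hl; rewrite /eta_cc -(swap_wt Hz Hl) -ecc_delta. Qed.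

Lemma swap_cc' eta v (z : {set HatE G}) : cycle_cover z -> Vloop v \in z ->
  eta_cc eta (swap v z) = eta_cc eta z + eta 0 ord_max.
Proof.
move=> Hz HV; rewrite -{2}(swapK v z) -swap_cc //; first exact: swap_cover.
by rewrite mem_swap /gsw eqxx.
Qed.

Lemma pt_swap v (z : {set HatE G}) : cycle_cover z -> lamloop v \in z ->
  pt z = pt (swap v z) + delta_mx 0 ord_max.
Proof.
move=> Hz Hl; apply/rowP => i; rewrite !mxE -(swap_wt Hz Hl) !mxE intrD.
by case: (_ && _).
Qed.

Lemma dot_delta eta : dotZR eta (delta_mx 0 ord_max : 'rV[R]_(d.+1)) = (eta 0 ord_max)%:~R.
Proof.
rewrite /dotZR (bigD1 ord_max) //= mxE !eqxx mulr1 big1 ?addr0 // => i Ni.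
by rewrite mxE (negbTE Ni) andbF mulr0.
Qed.

Definition ccb (z : {set HatE G}) : bool :=
  [forall v, (#|[set e in z | htail e == v]| == 1%N) && (#|[set e in z | hhead e == v]| == 1%N)].

Lemma ccbP z : ccb z <-> cycle_cover z.
Proof.
split => [/forallP H v|H]; first by have /andP[/eqP ? /eqP ?] := H v.
by apply/forallP => v; have [-> ->] := H v.
Qed.
End Main.

Unset Implicit Arguments.

Theorem theorem2p16 (d : nat) (G : periodic_graph d) (eta : 'rV[int]_(d.+1)) :
  (vertical (exposed_face (newton G) eta) <->
     exists v : pg_W G, in_initial eta (lamloop v) /\ in_initial eta (Vloop v))
  /\ (vertical (exposed_face (newton G) eta) -> eta 0 ord_max = 0).
Proof.
set S := Phi_exponents G.
set dR := (delta_mx 0 ord_max : 'rV[Rdefinitions.R]_(d.+1)).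
have H01 : (0 : Rdefinitions.R) <= (0 : Rdefinitions.R) <= (1 : Rdefinitions.R) by apply/andP; split; lra.
have H11 : (0 : Rdefinitions.R) <= (1 : Rdefinitions.R) <= (1 : Rdefinitions.R) by apply/andP; split; lra.
have moreover : vertical (exposed_face (newton G) eta) -> eta 0 ord_max = 0.
  case=> x [t [t0 H]].
  have [Cx Mx] := H 0 H01; have [Cy My] := H 1 H11.
  rewrite mul0r scale0r addr0 in Cx Mx; rewrite mul1r in Cy My.
  have e1 := Mx _ Cy; have e2 := My _ Cx.
  rewrite dotZR_lin dot_delta in e1 e2.
  have : t * (eta 0 ord_max)%:~R = 0 by lra.
  by move/eqP; rewrite mulf_eq0 (negbTE t0) intr_eq0 => /eqP.
split => //; split.
  move=> V; have e0 := moreover V; case: V => x [t [t0 H]].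
  have [Cx Mx] := H 0 H01; have [Cy My] := H 1 H11.
  rewrite mul0r scale0r addr0 in Cx Mx; rewrite mul1r in Cy My.
  have [i0 _] : exists i0 : 'I_(size S), true.
    case: Cx => mu [_ [mu1 _]].
    case: (pickP (fun i : 'I_(size S) => true)) => [i0 _|H0]; first by exists i0.
    by move: mu1; rewrite big_pred0 // => /eqP; rewrite eq_sym oner_eq0.
  have : S`_i0 \in S by exact: mem_nth.
  move/supp_pt => [z0 [Cz0 _]].
  have [zm [/ccbP Czm Hm]] := @fin_min _ (@ccb d G) (eta_cc eta) z0 (proj2 (ccbP z0) Cz0).
  set c := eta_cc eta zm.
  have lb s : s \in S -> c%:~R <= dotZR eta s.
    by move/supp_pt => [z [Cz ->]]; rewrite dot_pt ler_int Hm //; apply/ccbP.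
  have Hx : dotZR eta x = c%:~R.
    apply/eqP; rewrite eq_le (in_conv_lb lb Cx) andbT.
    rewrite -dot_pt; apply: Mx; apply: in_conv_mem; apply/supp_pt; by exists zm.
  have Hy : dotZR eta (x + t *: dR) = c%:~R by rewrite dotZR_lin dot_delta e0 mulr0 addr0.
  case: (classic (exists z : {set HatE G}, cycle_cover z /\ eta_cc eta z = c /\ wt_exp z 0 ord_max != 0))
     => [[z [Cz [Ez Wz]]]|Hno].
    have [v Hl] := lam_count Wz; exists v; split.
      exists z; split => // z' Cz'; rewrite Ez; apply: Hm; exact/ccbP.
    exists (swap v z); split; first exact: swap_cover.
      by apply/imsetP; exists (lamloop v) => //; rewrite /gsw eqxx.
    move=> z' Cz'; have := swap_cc eta Cz Hl; rewrite e0 addr0 => <-.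
    rewrite Ez; apply: Hm; exact/ccbP.
  exfalso.
  have face s : s \in S -> dotZR eta s = c%:~R -> s 0 ord_max = 0.
    move/supp_pt => [z [Cz ->]]; rewrite dot_pt => /intr_inj Ez.
    rewrite mxE; case: (eqVneq (wt_exp z 0 ord_max) 0) => [->//|Wz].
    by exfalso; apply: Hno; exists z.
  have Fx := in_conv_face lb Cx Hx face.
  have Fy := in_conv_face lb Cy Hy face.
  move: Fy; rewrite !mxE Fx eqxx /= add0r eqxx mulr1 => /eqP.
  by rewrite (negbTE t0).
case=> v [[z1 [C1 I1 M1]] [z2 [C2 I2 M2]]].
have h1 := swap_cc eta C1 I1.
have h2 := swap_cc' eta C2 I2.
have e0 : eta 0 ord_max = 0.
  have := M1 _ (swap_cover v C1); have := M2 _ (swap_cover v C2).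
  rewrite h1 h2 => A B; apply/eqP; rewrite eq_le.
  by rewrite -(lerD2l (eta_cc eta (swap v z1))) addr0 B -(lerD2l (eta_cc eta z2)) addr0 A.
set z1' := swap v z1.
have Hp := pt_swap C1 I1.
have lb s : s \in S -> (eta_cc eta z1)%:~R <= dotZR eta s.
  by move/supp_pt => [z [Cz ->]]; rewrite dot_pt ler_int M1.
exists (pt z1'), 1; split; first exact: oner_neq0.
move=> s Hs.
have Ey : pt z1' + (s * 1) *: dR = (1 - s) *: pt z1' + s *: pt z1.
  by rewrite Hp scalerDr addrA -scalerDl subrK scale1r mulr1.
split.
  rewrite Ey; apply: in_conv_comb => //; apply: in_conv_mem; apply/supp_pt.
    by exists z1'; split => //; exact: swap_cover.
  by exists z1.
move=> y Cy; apply: le_trans (in_conv_lb lb Cy).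
by rewrite dotZR_lin dot_delta e0 mulr0 addr0 dot_pt h1 e0 addr0.
Qed.
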